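(* Let $F_6$ be the graph on vertices $a,b,c,d,e,f$ with edges $ab,ac,bc,ad,bd,be,ce,af,cf$, and let $(K_3)'_2$ be the graph obtained from the blow-up $P[K_2]$ of the path $P=u\,w\,v$ on three vertices by adding one edge between a vertex of the copy of $K_2$ replacing $u$ and a vertex of the copy of $K_2$ replacing $v$. If $G$ is a regular $K_3$-saturated graph, then $G[K_2]$ is a regular $F$-saturated graph for every graph $F$ such that $F$ contains a copy of $F_6$ and $(K_3)'_2$ contains a copy of $F$. In particular, $\liminf_{n\to\infty}\frac{\mathrm{rsat}(n,F)}{n^2}=0$ for every such $F$.
   Context: All graphs are finite and simple. For graphs $G,H$, the blow-up $G[H]$ is obtained by replacing each vertex of $G$ by a copy of $H$ and, for every edge $uv$ of $G$, adding all edges between the corresponding copies. A graph $G$ is $F$-saturated if it contains no copy of $F$ but adding any edge between non-adjacent vertices creates a copy of $F$. $\mathrm{rsat}(n,F)$ is the smallest number of edges of a regular $n$-vertex $F$-saturated graph, the $\liminf$ being over $n$ for which it is defined. *)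

(* Defs.v *)
From mathcomp Require Import all_boot.
Set Implicit Arguments. Unset Strict Implicit. Unset Printing Implicit Defensive.

Definition simple_graph (T : finType) (e : rel T) : Prop :=
  symmetric e /\ irreflexive e.

Definition contains (V T : finType) (f : rel V) (e : rel T) : Prop :=
  exists g : V -> T, injective g /\ forall u v, f u v -> e (g u) (g v).

Definition add_edge (T : finType) (e : rel T) (x y : T) : rel T :=
  fun u v => [|| e u v, (u == x) && (v == y) | (u == y) && (v == x)].

Definition saturated (V T : finType) (f : rel V) (e : rel T) : Prop :=
  ~ contains f e /\
  forall x y : T, x != y -> ~~ e x y -> contains f (add_edge e x y).

Definition regular (T : finType) (e : rel T) : Prop :=
  exists k, forall v : T, #|[set w | e v w]| = k.

Definition blowup (T U : finType) (e : rel T) (h : rel U) : rel (T * U) :=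
  fun p q => e p.1 q.1 || ((p.1 == q.1) && h p.2 q.2).

Definition K2 : rel bool := fun a b => a != b.
Definition K3 : rel 'I_3 := fun i j => i != j.

(* F_6 on a,b,c,d,e,f = 0,...,5 *)
Definition F6_edges : seq (nat * nat) :=
  [:: (0,1); (0,2); (1,2); (0,3); (1,3); (1,4); (2,4); (0,5); (2,5)].
Definition F6 : rel 'I_6 :=
  fun i j => ((val i, val j) \in F6_edges) || ((val j, val i) \in F6_edges).

(* path u w v = 0 1 2 *)
Definition P3 : rel 'I_3 :=
  fun i j => (val i == (val j).+1) || (val j == (val i).+1).

Definition K3'2 : rel ('I_3 * bool) :=
  fun p q => blowup P3 K2 p q ||
    [&& (val p.1 == 0) , (val q.1 == 2) , ~~ p.2 & ~~ q.2] ||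
    [&& (val p.1 == 2) , (val q.1 == 0) , ~~ p.2 & ~~ q.2].

Definition nedges (n : nat) (e : rel 'I_n) : nat :=
  #|[set p : 'I_n * 'I_n | e p.1 p.2 && (val p.1 < val p.2)]|.

(* rsat n F = m : the minimum number of edges of a regular n-vertex
   F-saturated graph is m (rsat n F is defined iff such m exists). *)
Definition rsat_is (V : finType) (f : rel V) (n m : nat) : Prop :=
  (exists e : rel 'I_n, simple_graph e /\ regular e /\ saturated f e /\ nedges e = m) /\
  (forall e : rel 'I_n, simple_graph e -> regular e -> saturated f e -> m <= nedges e).

(* Main.v *)
Require Import Defs.
From mathcomp Require Import all_boot zify.
From Stdlib Require Import Classical.
Set Implicit Arguments. Unset Strict Implicit. Unset Printing Implicit Defensive.


Lemma contains_trans (U V W : finType) (h : rel U) (f : rel V) (e : rel W) :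
  contains h f -> contains f e -> contains h e.
Proof.
move=> [g1 [i1 H1]] [g2 [i2 H2]]; exists (g2 \o g1); split.
  by move=> x y /i2 /i1.
by move=> u v /H1 /H2.
Qed.

Definition o3 (n : nat) : 'I_3 := inord n.

Lemma third (t t' : 'I_3) : t != t' -> exists s : 'I_3, (s != t) && (s != t').
Proof.
case: t => [[|[|[|t]]] Ht] //; case: t' => [[|[|[|t']]] Ht'] // _.
- by exists (@Ordinal 3 2 isT).
- by exists (@Ordinal 3 1 isT).
- by exists (@Ordinal 3 2 isT).
- by exists (@Ordinal 3 0 isT).
- by exists (@Ordinal 3 1 isT).
- by exists (@Ordinal 3 0 isT).
Qed.

Lemma K3_of (T : finType) (e : rel T) (x y z : T) :
  simple_graph e -> e x y -> e y z -> e x z -> contains K3 e.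
Proof.
move=> [se ie] hxy hyz hxz.
pose g (t : 'I_3) := if val t == 0 then x else if val t == 1 then y else z.
have E : forall t t', K3 t t' -> e (g t) (g t').
  rewrite /K3 /g => t t'.
  case: t => [[|[|[|t]]] Ht] //; case: t' => [[|[|[|t']]] Ht'] //=;
  rewrite ?hxy ?hyz ?hxz // => _; by rewrite se.
exists g; split => // t t' gtt'; apply/eqP; apply: contraT => /E.
by rewrite gtt' ie.
Qed.

Lemma K3_add (T : finType) (e : rel T) (x y z : T) :
  simple_graph e -> x != y -> e x z -> e z y -> contains K3 (add_edge e x y).
Proof.
move=> [se ie] nxy hxz hzy.
have nxz : x != z by apply: contraTneq hxz => ->; rewrite ie.
have nyz : y != z by apply: contraTneq hzy => ->; rewrite ie.
apply: (@K3_of _ _ x y z).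
- split; first by move=> u v; rewrite /add_edge se; case: (u == x); case: (v == y); case: (u == y); case: (v == x); rewrite ?orbT ?orbF ?andbT ?andbF.
  move=> u; rewrite /add_edge ie /=.
  have H : ~~ ((u == x) && (u == y)) by apply/andP => [[/eqP -> /eqP]]; apply/eqP.
  by rewrite [(u == y) && _]andbC (negbTE H).
- by rewrite /add_edge !eqxx orbT.
- by rewrite /add_edge se hzy.
- by rewrite /add_edge hxz.
Qed.

Lemma common_nb (T : finType) (e : rel T) (x y : T) :
  simple_graph e -> saturated K3 e -> x != y -> ~~ e x y ->
  exists z, e x z && e z y.
Proof.
move=> [se ie] [nK sat] nxy nexy.
have [g [ig Hg]] := sat x y nxy nexy.
apply: NNPP => nz; apply: nK; exists g; split => // t t' tt'.
have [s /andP [st st']] := third tt'.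
have A1 := Hg s t st; have A2 := Hg s t' st'.
have := Hg t t' tt'; rewrite /add_edge.
have gst : g s != g t by apply: contra st => /eqP /ig ->.
have gst' : g s != g t' by apply: contra st' => /eqP /ig ->.
case/or3P => [//|/andP [/eqP ht /eqP ht']|/andP [/eqP ht /eqP ht']].
- move: A1 A2; rewrite /add_edge -ht -ht' (negbTE gst) (negbTE gst') !andFb !orbF => A1 A2.
  by exfalso; apply: nz; exists (g s); rewrite -ht -ht' se A1 A2.
- move: A1 A2; rewrite /add_edge -ht -ht' (negbTE gst) (negbTE gst') !andFb !orbF => A1 A2.
  by exfalso; apply: nz; exists (g s); rewrite -ht -ht' se A1 A2.
Qed.

Ltac tryno3 no3 N :=
  first [ refine (no3 _ _ _ (N 0 1 isT isT isT) (N 1 2 isT isT isT) (N 0 2 isT isT isT) _ _); congruence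
        | refine (no3 _ _ _ (N 0 1 isT isT isT) (N 1 3 isT isT isT) (N 0 3 isT isT isT) _ _); congruence
        | refine (no3 _ _ _ (N 0 1 isT isT isT) (N 1 4 isT isT isT) (N 0 4 isT isT isT) _ _); congruence
        | refine (no3 _ _ _ (N 0 1 isT isT isT) (N 1 5 isT isT isT) (N 0 5 isT isT isT) _ _); congruence
        | refine (no3 _ _ _ (N 0 2 isT isT isT) (N 2 3 isT isT isT) (N 0 3 isT isT isT) _ _); congruence
        | refine (no3 _ _ _ (N 0 2 isT isT isT) (N 2 4 isT isT isT) (N 0 4 isT isT isT) _ _); congruence
        | refine (no3 _ _ _ (N 0 2 isT isT isT) (N 2 5 isT isT isT) (N 0 5 isT isT isT) _ _); congruence
        | refine (no3 _ _ _ (N 0 3 isT isT isT) (N 3 4 isT isT isT) (N 0 4 isT isT isT) _ _); congruence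
        | refine (no3 _ _ _ (N 0 3 isT isT isT) (N 3 5 isT isT isT) (N 0 5 isT isT isT) _ _); congruence
        | refine (no3 _ _ _ (N 0 4 isT isT isT) (N 4 5 isT isT isT) (N 0 5 isT isT isT) _ _); congruence
        | refine (no3 _ _ _ (N 1 2 isT isT isT) (N 2 3 isT isT isT) (N 1 3 isT isT isT) _ _); congruence
        | refine (no3 _ _ _ (N 1 2 isT isT isT) (N 2 4 isT isT isT) (N 1 4 isT isT isT) _ _); congruence
        | refine (no3 _ _ _ (N 1 2 isT isT isT) (N 2 5 isT isT isT) (N 1 5 isT isT isT) _ _); congruence
        | refine (no3 _ _ _ (N 1 3 isT isT isT) (N 3 4 isT isT isT) (N 1 4 isT isT isT) _ _); congruence
        | refine (no3 _ _ _ (N 1 3 isT isT isT) (N 3 5 isT isT isT) (N 1 5 isT isT isT) _ _); congruence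
        | refine (no3 _ _ _ (N 1 4 isT isT isT) (N 4 5 isT isT isT) (N 1 5 isT isT isT) _ _); congruence
        | refine (no3 _ _ _ (N 2 3 isT isT isT) (N 3 4 isT isT isT) (N 2 4 isT isT isT) _ _); congruence
        | refine (no3 _ _ _ (N 2 3 isT isT isT) (N 3 5 isT isT isT) (N 2 5 isT isT isT) _ _); congruence
        | refine (no3 _ _ _ (N 2 4 isT isT isT) (N 4 5 isT isT isT) (N 2 5 isT isT isT) _ _); congruence
        | refine (no3 _ _ _ (N 3 4 isT isT isT) (N 4 5 isT isT isT) (N 3 5 isT isT isT) _ _); congruence ].

Section Blow.
Variables (T : finType) (e : rel T).
Hypothesis se : symmetric e.
Hypothesis ie : irreflexive e.

Local Notation B := (blowup e K2).

Lemma blow_simple : simple_graph B.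
Proof.
split.
  by move=> p q; rewrite /blowup /K2 se (eq_sym p.1) (eq_sym p.2).
by move=> p; rewrite /blowup /K2 ie !eqxx.
Qed.

Lemma blow_deg (p : T * bool) :
  #|[set q | B p q]| = (#|[set w | e p.1 w]|).*2.+1.
Proof.
have -> : [set q | B p q] = (p.1, ~~ p.2) |: setX [set w | e p.1 w] setT.
  apply/setP => [[w b]]; rewrite !inE /blowup /K2 /= andbT.
  case: (e p.1 w); rewrite ?orbT //= orbF xpair_eqE eq_sym.
  by case: (w == p.1); case: b; case: (p.2).
rewrite cardsU1 cardsX cardsT card_bool !inE ie /=.
by rewrite -mul2n mulnC add1n.
Qed.

Lemma blow_noF6 : ~ contains K3 e -> ~ contains F6 B.
Proof.
move=> nK [g [ig Hg]].
pose P i := (g i).1.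
have tri : forall i j l : 'I_6, F6 i j -> F6 j l -> F6 i l ->
    P i = P j \/ P j = P l \/ P i = P l.
  move=> i j l hij hjl hil; apply: NNPP => H; apply: nK.
  have Ne : forall a b, F6 a b -> P a <> P b -> e (P a) (P b).
    move=> a b /Hg; rewrite /blowup /P; case: eqP => // _; rewrite orbF //.
  apply: (@K3_of _ _ (P i) (P j) (P l)) => //.
  - by apply: Ne => // E; apply: H; left.
  - by apply: Ne => // E; apply: H; right; left.
  - by apply: Ne => // E; apply: H; right; right.
have no3 : forall i j l : 'I_6, i != j -> j != l -> i != l ->
    P i = P j -> P j = P l -> False.
  move=> i j l nij njl nil eij ejl.
  have eq2 : forall a b, P a = P b -> (g a).2 = (g b).2 -> a = b.
    by move=> a b h1 h2; apply: ig; rewrite [g a]surjective_pairing [g b]surjective_pairing -/(P a) -/(P b) h1 h2.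
  move: (eq2 i j eij) (eq2 j l ejl) (eq2 i l (etrans eij ejl)).
  case: (g i).2; case: (g j).2; case: (g l).2 => H1 H2 H3;
    first [ by rewrite (H1 erefl) eqxx in nij | by rewrite (H2 erefl) eqxx in njl | by rewrite (H3 erefl) eqxx in nil ].
pose o (n : nat) : 'I_6 := inord n.
have vo : forall a, (a < 6)%N -> val (o a) = a by move=> a ha; exact: inordK.
have F : forall a b, (a < 6)%N -> (b < 6)%N -> ((a, b) \in F6_edges) -> F6 (o a) (o b).
  by move=> a b ha hb h; rewrite /F6 !vo // h.
have N : forall a b, (a < 6)%N -> (b < 6)%N -> a != b -> o a != o b.
  by move=> a b ha hb; apply: contra => /eqP /(congr1 val); rewrite !vo // => ->.
have T1 := tri (o 0) (o 1) (o 2) (F 0 1 isT isT isT) (F 1 2 isT isT isT) (F 0 2 isT isT isT).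
have T2 := tri (o 0) (o 1) (o 3) (F 0 1 isT isT isT) (F 1 3 isT isT isT) (F 0 3 isT isT isT).
have T3 := tri (o 1) (o 2) (o 4) (F 1 2 isT isT isT) (F 2 4 isT isT isT) (F 1 4 isT isT isT).
have T4 := tri (o 0) (o 2) (o 5) (F 0 2 isT isT isT) (F 2 5 isT isT isT) (F 0 5 isT isT isT).
case: T1 => [?|[?|?]]; case: T2 => [?|[?|?]]; case: T3 => [?|[?|?]]; case: T4 => [?|[?|?]]; tryno3 no3 N.
Qed.

Lemma blow_sat : saturated K3 e -> forall x y, x != y -> ~~ B x y ->
  contains K3'2 (add_edge B x y).
Proof.
move=> sat [v b] [w c] nxy nB.
have nvw : v != w.
  apply: contra nxy => /eqP evw; move: nB; rewrite /blowup /K2 /= evw eqxx ie /=.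
  by rewrite negbK => /eqP bc; rewrite bc.
have nevw : ~~ e v w by move: nB; rewrite /blowup /=; case: (e v w).
have [z /andP [hvz hzw]] := common_nb (conj se ie) sat nvw nevw.
have nvz : v != z by apply: contraTneq hvz => ->; rewrite ie.
have nwz : w != z by apply: contraTneq hzw => ->; rewrite ie.
pose hv (i : 'I_3) := if val i == 0 then v else if val i == 1 then z else w.
pose hb (i : 'I_3) (be : bool) := if val i == 0 then addb b be else if val i == 1 then be else addb c be.
pose h (p : 'I_3 * bool) := (hv p.1, hb p.1 p.2).
have hvP : forall i i', P3 i i' -> e (hv i) (hv i').
  rewrite /P3 /hv => i i'.
  case: i => [[|[|[|i]]] Hi] //; case: i' => [[|[|[|i']]] Hi'] //= _; by rewrite // se.
have hvI : forall i i', hv i = hv i' -> i = i'.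
  rewrite /hv => i i'; case: i => [[|[|[|i]]] Hi] //; case: i' => [[|[|[|i']]] Hi'] //= E;
  try (apply: val_inj => //); subst; rewrite ?eqxx in nvz nwz nvw *; by [].
have hbI : forall i be be', hb i be = hb i be' -> be = be'.
  rewrite /hb => i be be'; case: (val i == 0); last case: (val i == 1); try done;
  by case: be; case: be'; case: (b); case: (c).
exists h; split.
  move=> [i be] [i' be'] [/hvI E1 E2]; subst i'; by rewrite (hbI _ _ _ E2).
move=> [i be] [i' be']; rewrite /K3'2 /blowup /K2 /add_edge /=.
case/orP => [/orP [|]|].
- case/orP => [/hvP -> //|/andP [/eqP <- nb]].
  by rewrite eqxx /= (contra (fun H => introT eqP (hbI i be be' (elimT eqP H))) nb) orbT.
- case/and4P => /eqP i0 /eqP i2 /negbTE -> /negbTE ->.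
  by rewrite /h /hv /hb /= i0 i2 /= !addbF !eqxx orbT.
- case/and4P => /eqP i0 /eqP i2 /negbTE -> /negbTE ->.
  by rewrite /h /hv /hb /= i0 i2 /= !addbF !eqxx !orbT.
Qed.
End Blow.

Lemma contains_transp (V T : finType) (f : rel V) (r : rel T) (r' : rel 'I_#|T|) :
  (forall u v, r' u v = r (enum_val u) (enum_val v)) -> (contains f r' <-> contains f r).
Proof.
move=> H; split.
  move=> [g [ig Hg]]; exists (enum_val \o g); split.
    by move=> x y /enum_val_inj /ig.
  by move=> u v /Hg; rewrite H.
move=> [g [ig Hg]]; exists (enum_rank \o g); split.
  by move=> x y /(congr1 enum_val); rewrite /= !enum_rankK => /ig.
by move=> u v /Hg; rewrite H /= !enum_rankK.
Qed.

Lemma nedges_le (n : nat) (e : rel 'I_n) D :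
  (forall i, #|[set j | e i j]| = D) -> nedges e <= n * D.
Proof.
move=> HD; rewrite /nedges.
apply: (@leq_trans #|[set p : 'I_n * 'I_n | e p.1 p.2]|).
  by apply: subset_leq_card; apply/subsetP => p; rewrite !inE => /andP [].
have -> : n * D = \sum_(i : 'I_n) \sum_(j | e i j) 1.
  transitivity (\sum_(i : 'I_n) D); first by rewrite sum_nat_const card_ord.
  apply: eq_bigr => i _.
  by rewrite sum1_card -(HD i) cardsE.
rewrite pair_big_dep /= sum1_card cardsE.
by apply: eq_leq; apply: eq_card => p.
Qed.

Lemma transport (V T : finType) (f : rel V) (E : rel T) D :
  simple_graph E -> (forall x, #|[set y | E x y]| = D) -> saturated f E ->
  exists e : rel 'I_#|T|, simple_graph e /\ regular e /\ saturated f e /\ nedges e <= #|T| * D.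
Proof.
move=> [sE iE] HD [nF sat].
pose e : rel 'I_#|T| := fun i j => E (enum_val i) (enum_val j).
have HDe : forall i, #|[set j | e i j]| = D.
  move=> i; rewrite -(HD (enum_val i)) -(card_imset _ (@enum_val_inj T T)).
  apply: eq_card => y; rewrite -[y]enum_rankK mem_imset; last exact: enum_val_inj.
  by rewrite !inE.
exists e; split; [split|split; [exists D => //|split]].
- by move=> i j; rewrite /e sE.
- by move=> i; rewrite /e iE.
- split.
    by move=> H; apply: nF; apply/(@contains_transp V T f E e (fun _ _ => erefl)).
  move=> x y nxy nexy.
  apply/(@contains_transp V T f (add_edge E (enum_val x) (enum_val y))).
    by move=> u v; rewrite /add_edge /e !(inj_eq enum_val_inj).
  apply: sat => //; by rewrite (inj_eq enum_val_inj).
- exact: nedges_le.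
Qed.

Lemma rsat_ex (V : finType) (f : rel V) n m0 :
  (exists e : rel 'I_n, simple_graph e /\ regular e /\ saturated f e /\ nedges e <= m0) ->
  exists m, m <= m0 /\ rsat_is f n m.
Proof.
elim: m0 => [|m0 IH] [e [s [r [sa le]]]].
  exists 0; split => //; split => //; exists e; do !split => //; by case: (nedges e) le.
have [[e' [s' [r' [sa' le']]]]|H] := classic (exists e : rel 'I_n, simple_graph e /\ regular e /\ saturated f e /\ nedges e <= m0).
  have [m [hm hr]] := IH (ex_intro _ e' (conj s' (conj r' (conj sa' le')))).
  by exists m; split => //; apply: leqW.
exists m0.+1; split => //; split.
  exists e; do !split => //; apply/eqP; rewrite eqn_leq le /=; rewrite ltnNge; apply/negP => H'.
  by apply: H; exists e.
move=> e' s' r' sa'; rewrite ltnNge; apply/negP => H'; by apply: H; exists e'.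
Qed.

Definition knV (j : nat) := {A : {set 'I_(3*j+2)} | #|A| == j.+1}.
Definition knE (j : nat) : rel (knV j) := fun A B => [disjoint val A & val B].
Arguments knE : clear implicits.

Lemma kn_simple j : simple_graph (knE j).
Proof.
split; first by move=> A B; rewrite /knE disjoint_sym.
move=> [A hA]; rewrite /knE /=; apply/negP => /disjoint_setI0; rewrite setIid => A0.
by move: hA; rewrite A0 cards0.
Qed.

Lemma kn_card j : #|{: knV j}| = 'C(3*j+2, j.+1).
Proof.
rewrite card_sig; have := card_draws 'I_(3*j+2) j.+1; rewrite card_ord => <-; apply: eq_card => X; by rewrite !inE.
Qed.

Lemma compl_card j (A : {set 'I_(3*j+2)}) : #|~: A| = 3*j+2 - #|A|.
Proof. have := cardsC A; rewrite card_ord; lia. Qed.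

Lemma kn_deg j (A : knV j) : #|[set B | knE j A B]| = 'C(2*j+1, j.+1).
Proof.
rewrite -(card_imset _ val_inj).
have -> : 2*j+1 = #|~: val A| by rewrite compl_card (eqP (valP A)); lia.
rewrite -cards_draws; apply: eq_card => X; rewrite inE.
apply/imsetP/andP.
  by move=> [B]; rewrite inE /knE => dB ->; rewrite -disjoints_subset disjoint_sym dB (valP B).
move=> [hX cX]; exists (Sub X cX) => //.
by rewrite inE /knE /= disjoint_sym disjoints_subset.
Qed.

Lemma kn_sat j : saturated K3 (knE j).
Proof.
split.
  move=> [g [ig Hg]].
  pose o (n : nat) : 'I_3 := inord n.
  have vo : forall a, a < 3 -> val (o a) = a by move=> a ha; exact: inordK.
  have K : forall a b, a < 3 -> b < 3 -> a != b -> K3 (o a) (o b).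
    by move=> a b ha hb; apply: contra => /eqP /(congr1 val); rewrite !vo // => ->.
  have d01 := Hg _ _ (K 0 1 isT isT isT).
  have d02 := Hg _ _ (K 0 2 isT isT isT).
  have d12 := Hg _ _ (K 1 2 isT isT isT).
  move: d01 d02 d12; rewrite /knE.
  move: (valP (g (o 0))) (valP (g (o 1))) (valP (g (o 2))).
  move: (val (g (o 0))) (val (g (o 1))) (val (g (o 2))) => A0 A1 A2 /eqP c0 /eqP c1 /eqP c2 d01 d02 d12.
  have c12 : #|A1 :|: A2| = 2 * j.+1 by rewrite cardsU (disjoint_setI0 d12) cards0 c1 c2; lia.
  have sub : A0 \subset ~: (A1 :|: A2).
    by rewrite setCU subsetI -!disjoints_subset d01 d02.
  have := subset_leq_card sub; rewrite compl_card c0 c12; lia.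
move=> A B nAB ndAB.
have hI : 0 < #|val A :&: val B|.
  rewrite card_gt0; apply: contra ndAB => /eqP E; by rewrite /knE -setI_eq0 E.
have hU : #|val A :|: val B| <= 2 * j + 1.
  move: hI; rewrite cardsU (eqP (valP A)) (eqP (valP B)); lia.
have : 0 < 'C(#|~: (val A :|: val B)|, j.+1).
  by rewrite bin_gt0 compl_card; lia.
rewrite -cards_draws card_gt0 => /set0Pn [X]; rewrite inE => /andP [sX cX].
pose C : knV j := Sub X cX.
have dAC : knE j A C.
  rewrite /knE /= disjoint_sym disjoints_subset; apply: (subset_trans sX).
  by rewrite setCS subsetUl.
have dCB : knE j C B.
  rewrite /knE /= disjoints_subset; apply: (subset_trans sX).
  by rewrite setCS subsetUr.
exact: (K3_add (kn_simple j) nAB dAC dCB).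
Qed.

Lemma ffact_ineq j i : 3^i * (2*j+1)^_i <= 2^i * (3*j+2)^_i.
Proof.
elim: i => [|i IH]; first by rewrite !ffactn0.
rewrite !ffactnSr !expnS.
have h : 3 * (2*j+1 - i) <= 2 * (3*j+2 - i) by lia.
have := leq_mul IH h.
set X := (2*j+1)^_i; set Y := (3*j+2)^_i; set a := 2*j+1-i; set b := 3*j+2-i.
set p := 3^i; set q := 2^i. nia.
Qed.

Lemma bern k : 2^k * (k+2) <= 2 * 3^k.
Proof.
elim: k => [//|k IH]; rewrite !expnS.
have : 2 * (k.+1 + 2) <= 3 * (k + 2) by lia.
nia.
Qed.

Lemma key j : (j+3) * 'C(2*j+1, j.+1) <= 2 * 'C(3*j+2, j.+1).
Proof.
set s := 'C(2*j+1, j.+1); set r := 'C(3*j+2, j.+1).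
have h1 : 3^(j.+1) * s <= 2^(j.+1) * r.
  rewrite -(@leq_pmul2r (j.+1)`!) ?fact_gt0 // -!mulnA !bin_ffact.
  exact: ffact_ineq.
have h2 := bern j.+1.
have h3 : 2^(j.+1) * ((j+3) * s) <= 2^(j.+1) * (2 * r).
  have := leq_mul h2 (leqnn s); have := leq_mul (leqnn 2) h1.
  rewrite (_ : j.+1 + 2 = j + 3); last by lia.
  set P2 := 2^(j.+1); set P3 := 3^(j.+1). nia.
by rewrite leq_pmul2l ?expn_gt0 in h3.
Qed.
Unset Implicit Arguments.

Theorem theorem3p2 (V : finType) (f : rel V) :
  simple_graph f -> contains F6 f -> contains f K3'2 ->
  (forall (T : finType) (e : rel T), simple_graph e ->
     regular e -> saturated K3 e ->
     regular (blowup e K2) /\ saturated f (blowup e K2)) /\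
  (forall k N : nat, 0 < k -> exists n m, N <= n /\ rsat_is f n m /\ k * m < n ^ 2).
Proof.
move=> sf cF6 cK.
have part1 : forall (T : finType) (e : rel T), simple_graph e ->
     regular e -> saturated K3 e ->
     regular (blowup e K2) /\ saturated f (blowup e K2).
  move=> T e [se ie] [D HD] [nK sat]; split.
    by exists D.*2.+1 => p; rewrite blow_deg // HD.
  split.
    by move=> cf; apply: (blow_noF6 se ie nK); exact: contains_trans cF6 cf.
  move=> x y nxy nB; apply: contains_trans cK _; exact: blow_sat.
split => // K N K0.
set j := 3*K + N.
set s := 'C(2*j+1, j.+1); set r := 'C(3*j+2, j.+1).
have ks := kn_simple j.
have [_ sat1] := part1 _ _ ks (ex_intro _ s (kn_deg (j:=j))) (kn_sat j).
have bs := blow_simple (proj1 ks) (proj2 ks).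
have bd : forall x, #|[set y | blowup (knE j) K2 x y]| = s.*2.+1.
  by move=> x; rewrite blow_deg ?kn_deg //; case: ks.
have [e [s1 [r1 [sa1 le1]]]] := transport bs bd sat1.
have [m [hm hr]] := rsat_ex (ex_intro _ e (conj s1 (conj r1 (conj sa1 le1)))).
have cn : #|{: knV j * bool}| = r * 2 by rewrite card_prod kn_card card_bool.
exists #|{: knV j * bool}|, m; rewrite cn in hm hr *; split; last split => //.
- have := key j; have : 0 < s by rewrite bin_gt0; lia.
  rewrite -/s -/r; nia.
- have := key j; have : 0 < s by rewrite bin_gt0; lia.
  rewrite -/s -/r => s0 kj.
  have h1 : K * (s.*2.+1) < r * 2 by rewrite -muln2; nia.
  have h2 : K * m <= (r * 2) * (K * s.*2.+1).
    by rewrite mulnCA leq_mul2l hm orbT.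
  apply: (leq_ltn_trans h2); rewrite expnS expn1 ltn_pmul2l //; nia.
Qed.
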